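(* For every forest $T$ and every integer $k\geq 3$, $\sigma(T)=\tau_1(T^{(k)})$. Equivalently, $\sigma(T)$ is the minimum size of a set $Y$ such that $T^{(k)}$ is isomorphic to a subhypergraph of $\{\{y\}\cup Z': y\in Y,\ Z'\subseteq Z,\ |Z'|=k-1\}$ for some set $Z$ disjoint from $Y$.
   Context: For a graph $H$ and integer $k\geq 2$, the $k$-expansion $H^{(k)}$ is the $k$-uniform hypergraph obtained by replacing each edge $xy$ of $H$ by a $k$-set $E_{xy}$ consisting of $x,y$ and $k-2$ new vertices, where the sets $E_{xy}\setminus\{x,y\}$ are pairwise disjoint for distinct edges and disjoint from $V(H)$. For a forest $T$, $\sigma(T):=\min\{|X|+e(T\setminus X): X\subseteq V(T)\text{ independent in }T\}$, where $T\setminus X$ is obtained by deleting the vertices of $X$ and all incident edges and $e(\cdot)$ counts edges. A set $Y$ is a 1-cross-cut of a family $\mathcal C$ of sets if $|Y\cap E|=1$ for every $E\in\mathcal C$; $\tau_1(\mathcal C)$ is the minimum size of a 1-cross-cut of $\mathcal C$ (and $\infty$ if none exists). *)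

(* Defs.v *)
From mathcomp Require Import all_boot.
Set Implicit Arguments. Unset Strict Implicit. Unset Printing Implicit Defensive.

Definition simple_graph (T : finType) (e : rel T) : Prop :=
  symmetric e /\ irreflexive e.

Definition forest (T : finType) (e : rel T) : Prop :=
  simple_graph e /\
  forall c : seq T, uniq c -> 2 < size c -> ~~ cycle e c.

Definition edges (T : finType) (e : rel T) : {set {set T}} :=
  [set [set x; y] | x in T, y in T & e x y].

Definition independent (T : finType) (e : rel T) (X : {set T}) : bool :=
  [forall x in X, forall y in X, ~~ e x y].

Definition edges_outside (T : finType) (e : rel T) (X : {set T}) : nat :=
  #|[set s in edges e | [disjoint s & X]]|.

(* sigma(T) = min over independent X of |X| + e(T\X).  X = set0 is always
   independent and has value #|edges e|, so using it as the neutral element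
   gives the exact minimum. *)
Definition sigma (T : finType) (e : rel T) : nat :=
  \big[minn/#|edges e|]_(X : {set T} | independent e X)
     (#|X| + edges_outside e X).

(* Vertex type: original vertices (inl) plus, for each
   2-set s and each i < k-2, a new vertex inr (s, i).  Only the new vertices
   whose s is an edge of T occur in hyperedges; the others are isolated. *)
Definition exp_vtx (T : finType) (k : nat) : finType :=
  (T + ({set T} * 'I_(k - 2)))%type.

Definition exp_edge (T : finType) (k : nat) (s : {set T}) : {set exp_vtx T k} :=
  [set inl x | x in s] :|: [set inr (s, i) | i : 'I_(k - 2)].

Definition expansion (T : finType) (e : rel T) (k : nat) : {set {set exp_vtx T k}} :=
  [set exp_edge k s | s in edges e].

(* 1-cross-cuts and tau_1 (None encodes infinity). *)
Definition cross1 (V : finType) (C : {set {set V}}) (Y : {set V}) : bool :=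
  [forall E in C, #|Y :&: E| == 1].

Definition tau1 (V : finType) (C : {set {set V}}) : option nat :=
  if [exists Y, cross1 C Y]
  then Some (\big[minn/#|V|]_(Y : {set V} | cross1 C Y) #|Y|)
  else None.

(* Main.v *)
From mathcomp Require Import all_boot.
Require Import Defs.
Set Implicit Arguments. Unset Strict Implicit. Unset Printing Implicit Defensive.
Lemma bigmin_le_seq (I : eqType) (r : seq I) (F : I -> nat) a j : j \in r -> \big[minn/a]_(i <- r) F i <= F j.
Proof.
elim: r => // x r IH; rewrite inE big_cons => /orP [/eqP <-|/IH]; first exact: geq_minl.
by move=> h; rewrite geq_min h orbT.
Qed.
Lemma bigmin_le (I : finType) (P : pred I) (F : I -> nat) a j : P j -> \big[minn/a]_(i | P i) F i <= F j.
Proof. move=> Pj; rewrite -big_filter; apply: bigmin_le_seq; by rewrite mem_filter Pj mem_index_enum. Qed.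
Lemma le_bigmin (I : finType) (P : pred I) (F : I -> nat) a m : m <= a -> (forall i, P i -> m <= F i) -> m <= \big[minn/a]_(i | P i) F i.
Proof. move=> ma H; elim/big_ind: _ => // x y; rewrite leq_min => -> ->. done. Qed.

Lemma in_exp_l (T : finType) k (s : {set T}) z :
  (inl z \in exp_edge k s) = (z \in s).
Proof.
rewrite /exp_edge inE; apply/orP/idP => [[/imsetP [x xs [->]] //|/imsetP [i _] //]|zs].
by left; apply: imset_f.
Qed.

Lemma in_exp_r (T : finType) k (s t : {set T}) i :
  (inr (t, i) \in exp_edge k s) = (t == s).
Proof.
rewrite /exp_edge inE; apply/orP/eqP => [[/imsetP [x _] //|/imsetP [j _ [-> _]] //]|->].
by right; apply: imset_f.
Qed.

Lemma edgesP (T : finType) (e : rel T) s :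
  reflect (exists x y, e x y /\ s = [set x; y]) (s \in edges e).
Proof.
apply: (iffP idP).
  by rewrite /edges => /imset2P [x y _]; rewrite inE => exy ->; exists x, y; split.
by case=> x [y [exy ->]]; rewrite /edges; apply/imset2P; exists x y; rewrite ?inE.
Qed.

Definition XofY {T : finType} {k} (Y : {set exp_vtx T k}) : {set T} :=
  [set x | inl x \in Y].

Definition outs {T : finType} (e : rel T) (X : {set T}) :=
  [set s in edges e | [disjoint s & X]].

Lemma cross_indep (T : finType) (e : rel T) k Y :
  irreflexive e -> cross1 (expansion e k) Y -> independent e (XofY Y).
Proof.
move=> irr /forall_inP cr; apply/forall_inP => x; rewrite inE => xY.
apply/forall_inP => y; rewrite inE => yY; apply/negP => exy.
have sE : [set x; y] \in edges e by apply/edgesP; exists x, y.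
have /eqP c1 := cr _ (imset_f (exp_edge k) sE).
have : #|[set (inl x : exp_vtx T k); inl y]| <= #|Y :&: exp_edge k [set x; y]|.
  apply: subset_leq_card; apply/subsetP => v; rewrite in_set2.
  by case/orP => /eqP ->; rewrite in_setI ?xY ?yY in_exp_l !inE eqxx ?orbT.
rewrite c1 cards2; case: eqP => // [[exy']]; by rewrite exy' irr in exy.
Qed.

Lemma cross_card (T : finType) (e : rel T) k Y :
  cross1 (expansion e k) Y -> #|XofY Y| + #|outs e (XofY Y)| <= #|Y|.
Proof.
move=> /forall_inP cr.
set X := XofY Y; set O := outs e X.
pose A := [set v in Y | v \in [set inl x | x in X]].
pose B := [set v in Y | if v is inr p then p.1 \in O else false].
pose g (v : exp_vtx T k) := if v is inr p then p.1 else set0.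
have hX : #|X| <= #|A|.
  rewrite -(card_imset _ (@inl_inj T ({set T} * 'I_(k-2)))).
  apply: subset_leq_card; apply/subsetP => v vi; rewrite inE vi andbT; case/imsetP: vi => x; rewrite inE => xY ->.
  done.
have hO : #|O| <= #|B|.
  apply: leq_trans (leq_imset_card g B); apply: subset_leq_card; apply/subsetP => s sO.
  move: (sO); rewrite inE => /andP [sE dis].
  have /cards1P [w hw] := cr _ (imset_f (exp_edge k) sE).
  have : w \in Y :&: exp_edge k s by rewrite hw set11.
  rewrite in_setI; case: w {hw} => [z|[t i]] /andP [wY].
    rewrite in_exp_l => zs; have zX : z \in X by rewrite inE.
    by move/disjointFr: dis => /(_ z zs); rewrite zX.
  rewrite in_exp_r => /eqP ts; subst t.
  by apply/imsetP; exists (inr (s, i)) => //; rewrite inE wY /= sO.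
have AB : A :&: B = set0.
  apply/setP => v; rewrite !inE; case: v => [x|p]; first by rewrite !andbF.
  by apply/negP => /and3P [/andP [_ /imsetP [? _]]].
have : #|A :|: B| <= #|Y|.
  by apply: subset_leq_card; apply/subsetP => v; rewrite !inE => /orP [] /andP [].
rewrite cardsU AB cards0 subn0 => h.
exact: leq_trans (leq_add hX hO) h.
Qed.

Lemma build_cross (T : finType) (e : rel T) k X :
  independent e X -> 2 < k ->
  exists Y, cross1 (expansion e k) Y /\ #|Y| <= #|X| + edges_outside e X.
Proof.
move=> ind k3.
have k2 : 0 < k - 2 by rewrite subn_gt0.
pose i0 : 'I_(k - 2) := Ordinal k2.
set O := outs e X.
pose R := [set (inr (s, i0) : exp_vtx T k) | s in O].
have inRr t i : (inr (t, i) \in R) = (t \in O) && (i == i0).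
  apply/imsetP/andP => [[s sO [-> ->]]|[tO /eqP ->]]; first by split.
  by exists t.
have inRl z : (inl z \in R) = false by apply/negP => /imsetP [].
have inLr p : (inr p \in [set (inl x : exp_vtx T k) | x in X]) = false.
  by apply/negP => /imsetP [].
have inLl z : (inl z \in [set (inl x : exp_vtx T k) | x in X]) = (z \in X).
  by rewrite mem_imset //; exact: inl_inj.
exists ([set inl x | x in X] :|: R); split.
  apply/forall_inP => E /imsetP [s sE ->]; apply/cards1P.
  case: (boolP [disjoint s & X]) => dis.
    exists (inr (s, i0)); apply/setP => w; rewrite in_setI in_set1 in_setU.
    case: w => [z|[t i]]; first by rewrite inLl inRl in_exp_l; case: (boolP (z \in s)) => zs;
      rewrite ?andbF // (disjointFr dis zs).
    rewrite inLr inRr in_exp_r /= /O inE.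
    apply/idP/eqP => [/andP [/andP [/andP [_ _] /eqP ->] /eqP ->] //|[-> ->]].
    by rewrite sE dis !eqxx.
  have [z /setIP [zs zX]] : exists z, z \in s :&: X.
    by apply/set0Pn; rewrite setI_eq0.
  exists (inl z); apply/setP => w; rewrite in_setI in_set1 in_setU.
  case: w => [z'|[t i]].
    rewrite inLl inRl orbF in_exp_l; apply/andP/eqP => [[z'X z's]|[->]]; last by [].
    congr inl; apply/eqP; apply/negPn/negP => nz.
    case/edgesP: sE => x [y [exy sxy]].
    move: zs z's; rewrite sxy !in_set2.
    have nxy : forall a b, a \in X -> b \in X -> ~~ e a b.
      by move=> a b aX bX; move/forall_inP: ind => /(_ a aX) /forall_inP /(_ b bX).
    case/orP => /eqP zx; case/orP => /eqP z'x; rewrite zx z'x in nz zX z'X;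
      rewrite ?eqxx // in nz;
      by [move: (nxy _ _ zX z'X); rewrite exy | move: (nxy _ _ z'X zX); rewrite exy].
  rewrite inLr inRr in_exp_r /= /O inE.
  apply/negP => /andP [/andP [/andP [_ dis'] _] /eqP ts]; subst t.
  by rewrite dis' in dis.
rewrite cardsU; apply: leq_trans (leq_subr _ _) _.
apply: leq_add; first exact: leq_imset_card.
exact: leq_imset_card.
Qed.

Theorem mainTheorem5 (T : finType) (e : rel T) (k : nat) :
  forest e -> 3 <= k -> tau1 (expansion e k) = Some (sigma e).
Proof.
case=> [[sym irr] _] k3.
have ind0 : independent e set0 by apply/forall_inP => x; rewrite inE.
have [Y0 [cr0 _]] := build_cross ind0 k3.
rewrite /tau1; have -> : [exists Y, cross1 (expansion e k) Y] by apply/existsP; exists Y0.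
congr Some; apply/eqP; rewrite eqn_leq; apply/andP; split.
  apply: le_bigmin.
    have [Y1 [cr1 h1]] := build_cross ind0 k3.
    apply: leq_trans (bigmin_le _ _ cr1) _; apply: leq_trans h1 _.
    rewrite cards0 add0n; apply: subset_leq_card; apply/subsetP => s; rewrite inE; by case/andP.
  move=> X indX; have [Y [cr h]] := build_cross indX k3.
  exact: leq_trans (bigmin_le _ _ cr) h.
apply: le_bigmin.
  apply: leq_trans (bigmin_le _ _ (cross_indep irr cr0)) _.
  exact: leq_trans (cross_card cr0) (max_card _).
move=> Y crY.
apply: leq_trans (bigmin_le _ _ (cross_indep irr crY)) _.
exact: cross_card.
Qed.
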